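(* Let $M>0$ be fixed and, for integers $N\ge1$, let \[ p_N(\lambda)=-\lambda(-M-\lambda)^N+M\,N!\sum_{n=0}^{N-1}\frac{(-M-\lambda)^n}{n!}+(-1)^N M\,N!\,. \] Then there exists $N_0$ such that for all $N\ge N_0$ the polynomial $p_N$ has at least one positive real root.
   Context: $p_N$ is the characteristic polynomial of the coefficient matrix of the linear ODE system satisfied by the $N$-th order $(x,v)$-moments of solutions of Model A, $\partial_tf+v\partial_xf=S[\rho_f](x+v)\rho_f(x)-Mf$, with $M$ the total mass. *)

(* Defs.v *)
From mathcomp Require Import all_boot all_order all_algebra.
From mathcomp Require Import reals.
Set Implicit Arguments. Unset Strict Implicit. Unset Printing Implicit Defensive.
Import Order.TTheory GRing.Theory Num.Theory.
Local Open Scope ring_scope.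

Definition pN (R : realType) (M : R) (N : nat) : {poly R} :=
  - 'X * (- M%:P - 'X) ^+ N
  + (M * (N`!)%:R) *: (\sum_(n < N) ((n`!)%:R)^-1 *: (- M%:P - 'X) ^+ n)
  + ((-1) ^+ N * M * (N`!)%:R)%:P.

(* Main.v *)
Require Import Defs.
From mathcomp Require Import all_boot all_order all_algebra.
From mathcomp Require Import reals.
From mathcomp Require Import all_classical all_reals.
From mathcomp Require Import topology normedtype sequences exp.
From mathcomp Require Import polyrcf.
From mathcomp Require Import ring lra.
Import Order.TTheory GRing.Theory Num.Theory.
Local Open Scope ring_scope.
Import numFieldNormedType.Exports.
Local Open Scope classical_set_scope.
Lemma S_bound (R : realType) (M : R) (hM : 0 < M) :
  exists N0, forall n, (N0 <= n)%N -> `|series (exp_coeff (- M)) n| < 1.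
Proof.
have cv : series (exp_coeff (- M)) @ \oo --> expR (- M) := is_cvg_series_exp_coeff (- M).
set e := expR (- M).
have e0 : 0 < e by apply: expR_gt0.
have e1 : e < 1 by rewrite /e expR_lt1 oppr_lt0.
have := cvgr_dist_lt _ _ cv (1 - e).
rewrite subr_gt0 => /(_ _ e1).
move=> [N0 _ HN]; exists N0 => n /HN /=.
move=> /=; rewrite -/e => h.
move: h; rewrite ltr_distlC => /andP[h1 h2].
rewrite ltr_norml; apply/andP; split; lra.
Qed.

Local Close Scope classical_set_scope.
Lemma size_sum_pow (R : realType) (u : {poly R}) (f : nat -> R) k :
  size u = 2%N -> (size (\sum_(n < k) f n *: u ^+ n)%R <= k)%N.
Proof.
move=> su; elim: k => [|k IH]; first by rewrite big_ord0 size_poly0.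
rewrite big_ord_recr /=; apply: leq_trans (size_polyD _ _) _.
rewrite geq_max (leq_trans IH) //=.
apply: leq_trans (size_scale_leq _ _) _.
by apply: leq_trans (size_poly_exp_leq _ _) _; rewrite su mul1n.
Qed.

Lemma pN_decomp (R : realType) (M : R) N :
  (-1) ^+ N.+1 *: pN M N = 'X * ('X - (- M)%:P) ^+ N +
   (-1) ^+ N.+1 *: ((M * (N`!)%:R) *: (\sum_(n < N) ((n`!)%:R)^-1 *: (- M%:P - 'X) ^+ n)
  + ((-1) ^+ N * M * (N`!)%:R)%:P).
Proof.
rewrite /pN -addrA scalerDr; congr (_ + _).
have -> : - M%:P - 'X = - ('X - (- M)%:P) :> {poly R}.
  by rewrite opprB polyCN.
rewrite [(- ('X - _)) ^+ N]exprNn -mul_polyC rmorphXn rmorphN rmorph1.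
have h : ((-1) ^+ N * (-1) ^+ N : {poly R}) = 1 by rewrite -exprMn mulrNN mulr1 expr1n.
rewrite exprS; transitivity ('X * ((-1) ^+ N * (-1) ^+ N) * ('X - (- M)%:P) ^+ N); first ring.
by rewrite h mulr1.
Qed.


Theorem lemma3 (R : realType) (M : R) (hM : 0 < M) :
  exists N0 : nat, forall N : nat, (1 <= N)%N -> (N0 <= N)%N ->
    exists lambda : R, 0 < lambda /\ root (pN M N) lambda.
Proof.
have [N0 HN0] := S_bound R M hM.
exists N0 => N N1 NN0.
have hS := HN0 N NN0.
set S := series (exp_coeff (- M)) N in hS.
set s : R := (-1) ^+ N.+1.
have s0 : s != 0 by rewrite /s expf_eq0 oppr_eq0 oner_eq0 andbF.
set Q := s *: pN M N.
have su : size (- M%:P - 'X : {poly R}) = 2%N.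
  by rewrite -opprD size_polyN addrC size_XaddC.
have lQ : lead_coef Q = 1.
  rewrite /Q pN_decomp lead_coefDl.
    by apply/monicP; rewrite monicMl ?monicX // monic_exp // monicXsubC.
  rewrite size_mul ?polyX_eq0 ?expf_neq0 ?polyXsubC_eq0 // size_polyX size_exp_XsubC /=.
  apply: leq_ltn_trans (size_scale_leq _ _) _.
  apply: leq_ltn_trans (size_polyD _ _) _.
  rewrite gtn_max; apply/andP; split.
    apply: leq_ltn_trans (size_scale_leq _ _) _.
    by apply: leq_ltn_trans (size_sum_pow R (- M%:P - 'X) (fun n : nat => (n`!%:R)^-1) N su) _.
  by apply: leq_ltn_trans (size_polyC_leq1 _) _.
have Q0 : Q.[0] < 0.
  rewrite /Q hornerZ /pN !hornerE horner_sum ?oppr0 ?mul0r ?add0r ?subr0.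
  have -> : \sum_(i < N) ((i`!%:R^-1 *: (- M%:P - 'X) ^+ i).[0] : R) = S.
    rewrite /S /series /= big_mkord; apply: eq_bigr => i _.
    by rewrite !hornerE ?subr0 /exp_coeff /= mulrC.
  have sN : s * (-1) ^+ N = -1.
    by rewrite /s exprS mulN1r mulNr -exprMn mulrNN mulr1 expr1n.
  have sS : s * S < 1.
    apply: le_lt_trans (ler_norm _) _.
    by rewrite normrM /s normrX normrN normr1 expr1n mul1r.
  have F0 : 0 < M * N`!%:R by rewrite mulr_gt0 // ltr0n fact_gt0.
  have -> : s * (M * N`!%:R * S + (-1) ^+ N * M * N`!%:R) =
     (M * N`!%:R) * (s * S + s * (-1) ^+ N) by ring.
  by rewrite sN pmulr_rlt0 // subr_lt0.
have [b Hb] : exists n, forall x, x >= n -> Q.[x] >= lead_coef Q.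
  by apply: poly_pinfty_gt_lc; rewrite lQ ltr01.
set b' := Num.max b 1.
have b'0 : 0 <= b' by rewrite le_max ler01 orbT.
have Qb : 0 <= Q.[b'] by rewrite (le_trans _ (Hb b' _)) ?lQ ?ler01 // le_max lexx.
have [x /andP[x0 xb] rx] := @poly_ivt R Q 0 b' b'0 (introT andP (conj (ltW Q0) Qb)).
exists x; split.
  rewrite lt_neqAle x0 andbT eq_sym; apply: contraTneq rx => ->.
  by rewrite /root lt_eqF.
by move: rx; rewrite /Q rootZ.
Qed.
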